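(* Let $\theta=\frac{a}{b}$ with $a,b$ positive integers, $a>b$. Let $w$ be a positive function on $(0,+\infty)$ such that $x^kw(x)$ is integrable on $(0,+\infty)$ for every integer $k\geq 0$, and let $p_j,q_j$ ($j=0,1,2,\dots$) be the biorthogonal polynomials defined in the context. Then there exist real coefficients $u_0(k),\dots,u_{a+b}(k)$ and $v_0(k),\dots,v_{a+b}(k)$ (for every integer $k\geq 0$) such that for all $x$, \begin{align*} x^ap_k(x) &=u_0(k)p_{k+a}(x) + u_1(k)p_{k+a-1}(x)+\dots +u_{a+b}(k)p_{k-b}(x),\\ x^bq_k(x) &=v_0(k)q_{k+b}(x) + v_1(k)q_{k+b-1}(x)+\dots +v_{a+b}(k)q_{k-a}(x), \end{align*} with the convention $p_j=q_j=0$ for $j<0$, and these coefficients satisfy $$u_j(k)=v_{a+b-j}(k+a-j)$$ (whenever $k+a-j\geq 0$). Moreover, for every integer $n\geq 1$, every complex $x$ and every $y\geq 0$ (with $y^\theta\geq 0$) such that $x^a\neq y^a$, the Christoffel–Darboux formula $$\sum_{k=0}^{n-1}p_k(x)q_k(y^\theta)=\frac{1}{x^a-y^a}\left(\sum_{\ell=1}^{a}\sum_{k=n-\ell}^{n-1}u_{a-\ell}(k)p_{k+\ell}(x)q_k(y^\theta)-\sum_{\ell=1}^b\sum_{k=n-\ell}^{n-1}u_{a+\ell}(k+\ell)p_k(x)q_{k+\ell}(y^\theta)\right)$$ holds, where terms involving a polynomial with negative index are zero.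
   Context: For $\theta\geq 1$ and $w$ as in the claim, the biorthogonal polynomials $p_j(x)=\kappa_jx^j+\dots$ and $q_j(x)=\kappa_jx^j+\dots$ are the (unique) polynomials of exact degree $j$, with equal positive leading coefficients $\kappa_j$, satisfying $\int_0^{+\infty}p_j(x)q_k(x^\theta)w(x)\,dx=\delta_{jk}$ for all $j,k\geq 0$. (Existence and uniqueness holds since the bimoment matrices $\left(\int_0^\infty x^{k+j\theta}w(x)dx\right)_{j,k=0}^{n-1}$ are nonsingular.) *)

(* Defs.v *)
From HB Require Import structures.
From mathcomp Require Import all_boot all_order all_algebra.
From mathcomp Require Import all_classical all_reals all_analysis.
From mathcomp Require Import complex.
Set Implicit Arguments. Unset Strict Implicit. Unset Printing Implicit Defensive.
Import Order.TTheory GRing.Theory Num.Theory.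
Local Open Scope ring_scope.

Definition pz (R : nzRingType) (p : nat -> {poly R}) (i : int) : {poly R} :=
  match i with Posz n => p n | Negz _ => 0 end.

Definition biorthogonal (R : realType) (theta : R) (w : R -> R)
    (p q : nat -> {poly R}) : Prop :=
  (forall j, size (p j) = j.+1 /\ size (q j) = j.+1 /\
             lead_coef (p j) = lead_coef (q j) /\ 0 < lead_coef (p j)) /\
  (forall j k,
     (\int[@lebesgue_measure R]_(x in `]0%R, +oo[%classic)
        ((p j).[x] * (q k).[x `^ theta] * w x)%:E)%E = ((j == k)%:R)%:E).

Definition cevalp (R : rcfType) (p : {poly R}) (z : complex R) : complex R :=
  (map_poly (real_complex R) p).[z].

(* Main.v *)
Require Import Defs.
From HB Require Import structures.
From mathcomp Require Import all_boot all_order all_algebra.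
From mathcomp Require Import all_classical all_reals all_analysis.
From mathcomp Require Import complex.
From mathcomp Require Import measurable_realfun.
From mathcomp Require Import zify ring lra.
Import Order.TTheory GRing.Theory Num.Theory.
Local Open Scope ring_scope.
Set Implicit Arguments. Unset Strict Implicit. Unset Printing Implicit Defensive.

Lemma sum_range_step (V : nmodType) (G : nat -> V) n l : (1 <= l)%N ->
  \sum_(n.+1 - l <= k < n.+1) G k + (if (l <= n)%N then G (n - l)%N else 0) =
  \sum_(n - l <= k < n) G k + G n.
Proof.
move=> l1; rewrite big_nat_recr /=; last by lia.
case: leqP => hl.
  have -> : (n.+1 - l = (n - l).+1)%N by lia.
  rewrite [in RHS]big_ltn; last by lia.
  by rewrite addrAC; congr (_ + _); exact: addrC.
have -> : (n.+1 - l = 0)%N by lia.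
have -> : (n - l = 0)%N by lia.
by rewrite addr0.
Qed.

Lemma sum_split (V : nmodType) (F : nat -> V) a b :
  \sum_(j < (a + b).+1) F j =
  \sum_(1 <= l < a.+1) F (a - l)%N + F a + \sum_(1 <= l < b.+1) F (a + l)%N.
Proof.
rewrite -(big_mkord xpredT) (big_cat_nat _ (n := a)) //=; last by lia.
rewrite [X in _ + X]big_ltn; last by lia.
rewrite addrA; congr (_ + _ + _).
  rewrite big_nat_rev /= big_add1 /=; apply: eq_big_nat => i /andP [h1 h2].
  by congr F; lia.
have -> : (a.+1 = 1 + a)%N by lia.
rewrite big_addn; have -> : ((a + b).+1 - a = b.+1)%N by lia.
by apply: eq_big_nat => i _; rewrite addnC.
Qed.

Lemma sum_delta (V : nmodType) (F : nat -> V) N K m :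
  \sum_(j < N) (if K == (m + j)%N then F j else 0) =
  if (m <= K)%N && (K - m < N)%N then F (K - m)%N else 0.
Proof.
elim: N => [|N IH]; first by rewrite big_ord0; case: ifP => //; lia.
rewrite big_ord_recr /= IH.
case: (eqVneq K (m + N)%N) => [->|hne].
  have -> : (m + N - m = N)%N by lia.
  rewrite leq_addr ltnn ltnSn /= add0r //.
rewrite addr0; case: (boolP ((m <= K)%N && (K - m < N)%N)) => h.
  by have -> : (m <= K)%N && (K - m < N.+1)%N by lia.
by have -> : ((m <= K)%N && (K - m < N.+1)%N) = false by apply/negP; lia.
Qed.

Lemma CD_alg (K : comNzRingType) (a b : nat) (U : nat -> nat -> K) (P Q : nat -> K) (X Yb : K) :
 (forall n, X * P n = \sum_(1 <= l < a.+1) U (a-l)%N n * P (n+l)%N + U a n * P n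
     + \sum_(1 <= l < b.+1) U (a+l)%N n * (if (l <= n)%N then P (n-l)%N else 0)) ->
 (forall n, Yb * Q n = \sum_(1 <= l < b.+1) U (a+l)%N (n+l)%N * Q (n+l)%N + U a n * Q n
     + \sum_(1 <= l < a.+1) (if (l <= n)%N then U (a-l)%N (n-l)%N * Q (n-l)%N else 0)) ->
 forall n, (X - Yb) * \sum_(k<n) P k * Q k =
   \sum_(1 <= l < a.+1) \sum_(n - l <= k < n) U (a - l)%N k * P (k + l)%N * Q k
 - \sum_(1 <= l < b.+1) \sum_(n - l <= k < n) U (a + l)%N (k + l)%N * P k * Q (k + l)%N.
Proof.
move=> Hp Hq; elim=> [|n IH].
  rewrite big_ord0 mulr0 !big1_seq ?subrr // => l _; rewrite big_geq //; lia.
rewrite big_ord_recr /= mulrDr IH.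
set A1 := \sum_(1 <= l < a.+1) _.
set A2 := \sum_(1 <= l < b.+1) _.
have E1 : \sum_(1 <= l < a.+1) \sum_(n.+1 - l <= k < n.+1) U (a - l)%N k * P (k + l)%N * Q k
  = A1 + \sum_(1 <= l < a.+1) U (a - l)%N n * P (n + l)%N * Q n
       - \sum_(1 <= l < a.+1) (if (l <= n)%N then U (a-l)%N (n-l)%N * Q (n-l)%N else 0) * P n.
  rewrite /A1 -big_split -sumrB /=; apply: eq_big_nat => l /andP [l1 _].
  rewrite -(sum_range_step _ _ l1); case: leqP => hl; rewrite ?subnK //; ring.
have E2 : \sum_(1 <= l < b.+1) \sum_(n.+1 - l <= k < n.+1) U (a + l)%N (k + l)%N * P k * Q (k + l)%N
  = A2 + \sum_(1 <= l < b.+1) U (a + l)%N (n + l)%N * P n * Q (n + l)%N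
       - \sum_(1 <= l < b.+1) U (a+l)%N n * (if (l <= n)%N then P (n-l)%N else 0) * Q n.
  rewrite /A2 -big_split -sumrB /=; apply: eq_big_nat => l /andP [l1 _].
  rewrite -(sum_range_step _ _ l1); case: leqP => hl; rewrite ?subnK //; ring.
rewrite E1 E2.
have -> : (X - Yb) * (P n * Q n) = (X * P n) * Q n - (Yb * Q n) * P n by ring.
rewrite Hp Hq !mulrDl !mulr_suml.
have -> : \sum_(1 <= i < b.+1) U (a + i)%N (n + i)%N * Q (n + i)%N * P n =
          \sum_(1 <= i < b.+1) U (a + i)%N (n + i)%N * P n * Q (n + i)%N.
  by apply: eq_bigr => i _; ring.
ring.
Qed.

Section Ana.
Variables (R : realType) (th : R) (w : R -> R).
Hypothesis th0 : 0 <= th.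
Hypothesis wpos : forall x : R, 0 < x -> 0 < w x.
Hypothesis wint : forall k : nat, (@lebesgue_measure R).-integrable `]0%R, +oo[%classic
                     (fun x => (x ^+ k * w x)%:E).
Local Notation D := (`]0%R, +oo[%classic : set R).
Local Notation mu := (@lebesgue_measure R).

Lemma mD : measurable (D : set (measurableTypeR R)). Proof. exact: measurable_itv. Qed.

Lemma inD x : x \in D -> 0 < x.
Proof. by rewrite inE /= in_itv /= andbT. Qed.

Lemma wint0 : mu.-integrable D (fun x => (w x)%:E).
Proof. by apply: (eq_integrable mD _ _ _ (wint 0)) => x _; rewrite expr0 mul1r. Qed.

Lemma wmeas : measurable_fun D w.
Proof. by have /integrableP [/measurable_EFinP + _] := wint0. Qed.

Lemma powR_bound (x s : R) (N : nat) : 0 < x -> 0 <= s -> s <= N%:R ->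
  x `^ s <= 1 + x ^+ N.
Proof.
move=> x0 s0 sN; case: (lerP x 1) => hx.
  have := @ger_powR _ x (ltac:(by rewrite x0 hx)) 0 s s0.
  rewrite powRr0 => h; apply: (le_trans h); by rewrite lerDl exprn_ge0 // ltW.
have := @ler_powR _ x (ltW hx) s N%:R sN; rewrite powR_mulrn ?(ltW x0) // => h.
by apply: (le_trans h); rewrite lerDr.
Qed.

Lemma int_pow s : 0 <= s -> mu.-integrable D (fun x => (x `^ s * w x)%:E).
Proof.
move=> s0; set N := (Num.truncn s).+1.
have sN : s <= N%:R by apply: ltW; exact: truncnS_gt.
apply: (@le_integrable _ _ _ _ _ mD _ (fun x => ((w x)%:E + (x ^+ N * w x)%:E)%E)).
- apply/measurable_EFinP; apply: measurable_funM => //.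
  by apply: measurable_funTS; apply: measurable_powR.
  exact: wmeas.
- move=> x /= Dx; have x0 : 0 < x by move: Dx; rewrite /= in_itv /= andbT.
  have w0 := ltW (wpos x0).
  rewrite lee_fin ger0_norm ?mulr_ge0 ?powR_ge0 //.
  rewrite ger0_norm ?addr_ge0 ?mulr_ge0 ?exprn_ge0 ?(ltW x0) //.
  rewrite -[X in _ <= X + _]mul1r -mulrDl ler_wpM2r //.
  exact: powR_bound.
- exact: (integrableD mD wint0 (wint N)).
Qed.

Lemma int_mono i j : mu.-integrable D (fun x => (x ^+ i * (x `^ th) ^+ j * w x)%:E).
Proof.
apply: (eq_integrable mD _ _ _ (int_pow (s := i%:R + th * j%:R) _)); last first.
  by rewrite addr_ge0 ?mulr_ge0.
move=> x /inD x0; congr EFin; congr (_ * _).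
rewrite powRD; last by rewrite (gt_eqF x0) /= implybT.
by rewrite powR_mulrn ?(ltW x0) // powRrM powR_mulrn // powR_ge0.
Qed.

Lemma int_poly (f g : {poly R}) :
  mu.-integrable D (fun x => (f.[x] * g.[x `^ th] * w x)%:E).
Proof.
apply: (eq_integrable mD _ _ _ (@integrable_sum _ _ _ mu _ mD _ (index_enum 'I_(size f)) xpredT
   (fun i x => \sum_(j < size g) ((f`_i * g`_j)%:E * (x ^+ i * (x `^ th) ^+ j * w x)%:E))%E _)).
  move=> x _ /=.
  rewrite (eq_bigr (fun i : 'I_(size f) => ((\sum_(j < size g) f`_i * g`_j * (x ^+ i * x `^ th ^+ j * w x)))%:E)); last first.
    by move=> i _; rewrite -sumEFin; apply: eq_bigr => j _; rewrite EFinM.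
  rewrite sumEFin; congr EFin.
  rewrite !horner_coef mulr_suml mulr_suml; apply: eq_bigr => i _.
  rewrite mulr_sumr mulr_suml; apply: eq_bigr => j _; ring.
move=> i _; apply: (@integrable_sum _ _ _ mu _ mD) => j _.
exact: (integrableZl mD (f`_i * g`_j) (int_mono i j)).
Qed.

Definition Bf (f g : {poly R}) := Rintegral mu D (fun x => f.[x] * g.[x `^ th] * w x).

Lemma BfD1 f1 f2 g : Bf (f1 + f2) g = Bf f1 g + Bf f2 g.
Proof.
rewrite /Bf -RintegralD ?mD ?int_poly //; apply: eq_Rintegral => x _.
by rewrite hornerD; ring.
Qed.

Lemma BfZ1 c f g : Bf (c *: f) g = c * Bf f g.
Proof.
rewrite /Bf -RintegralZl ?mD ?int_poly //; apply: eq_Rintegral => x _.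
by rewrite hornerZ; ring.
Qed.

Lemma BfD2 f g1 g2 : Bf f (g1 + g2) = Bf f g1 + Bf f g2.
Proof.
rewrite /Bf -RintegralD ?mD ?int_poly //; apply: eq_Rintegral => x _.
by rewrite hornerD; ring.
Qed.

Lemma BfZ2 c f g : Bf f (c *: g) = c * Bf f g.
Proof.
rewrite /Bf -RintegralZl ?mD ?int_poly //; apply: eq_Rintegral => x _.
by rewrite hornerZ; ring.
Qed.

Lemma BfB1 f1 f2 g : Bf (f1 - f2) g = Bf f1 g - Bf f2 g.
Proof. by rewrite -scaleN1r BfD1 BfZ1 mulN1r. Qed.

Lemma BfB2 f g1 g2 : Bf f (g1 - g2) = Bf f g1 - Bf f g2.
Proof. by rewrite -scaleN1r BfD2 BfZ2 mulN1r. Qed.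

Lemma Bfsum1 n (c : nat -> R) (F : nat -> {poly R}) g :
  Bf (\sum_(i < n) c i *: F i) g = \sum_(i < n) c i * Bf (F i) g.
Proof.
elim: n => [|n IH]; last by rewrite !big_ord_recr /= BfD1 BfZ1 IH.
by rewrite !big_ord0 -(scale0r 0) BfZ1 mul0r.
Qed.

Lemma Bfsum2 n (c : nat -> R) (F : nat -> {poly R}) f :
  Bf f (\sum_(i < n) c i *: F i) = \sum_(i < n) c i * Bf f (F i).
Proof.
elim: n => [|n IH]; last by rewrite !big_ord_recr /= BfD2 BfZ2 IH.
by rewrite !big_ord0 -(scale0r 0) BfZ2 mul0r.
Qed.

Lemma Bfshift (a b : nat) f g : th * b%:R = a%:R ->
  Bf ('X^a * f) g = Bf f ('X^b * g).
Proof.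
move=> hab; apply: eq_Rintegral => x /inD x0.
have e : (x `^ th) ^+ b = x `^ (th * b%:R) by rewrite powRrM powR_mulrn // powR_ge0.
rewrite !hornerM !hornerXn e hab.
by rewrite powR_mulrn ?ltW //; ring.
Qed.

End Ana.

Section Basis.
Variables (R : fieldType) (p : nat -> {poly R}).
Hypothesis hp : forall j, size (p j) = j.+1.

Lemma expand N (f : {poly R}) : (size f <= N)%N -> exists c : nat -> R, f = \sum_(m < N) c m *: p m.
Proof.
elim: N f => [|N IH] f hf.
  exists (fun=> 0); rewrite big_ord0; apply/eqP.
  by rewrite -size_poly_leq0.
set c0 := f`_N / lead_coef (p N).
have lc0 : lead_coef (p N) != 0 by rewrite lead_coef_eq0 -size_poly_gt0 hp.
have hs : (size (f - c0 *: p N)%R <= N)%N.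
  apply/leq_sizeP => j hj; rewrite coefB coefZ.
  case: (ltngtP N j) => hj'.
  - have h1 : f`_j = 0 by apply: nth_default; exact: leq_trans hf hj'.
    have h2 : (p N)`_j = 0 by apply: nth_default; rewrite hp.
    by rewrite h1 h2 mulr0 subr0.
  - by move: hj; rewrite leqNgt hj'.
  - have hl : (p N)`_N = lead_coef (p N) by rewrite lead_coefE hp.
    by rewrite -hj' hl /c0 divfK // subrr.
have [c hc] := IH _ hs.
exists (fun m => if m == N then c0 else c m); rewrite big_ord_recr /= eqxx.
rewrite (eq_bigr (fun i : 'I_N => c i *: p i)) => [|i _]; last by rewrite ltn_eqF.
by rewrite -hc subrK.
Qed.
End Basis.

Lemma sum_kron (R : nzRingType) N (c : nat -> R) (i : nat) :
  \sum_(m < N) c m * ((m : nat) == i)%:R = if (i < N)%N then c i else 0.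
Proof.
rewrite (eq_bigr (fun m : 'I_N => if i == (0 + m)%N then c m else 0)); last first.
  by move=> m _; rewrite add0n eq_sym; case: eqP => _; rewrite ?mulr1 ?mulr0.
by rewrite sum_delta subn0.
Qed.

Lemma pz_neg (R : nzRingType) (p : nat -> {poly R}) (i : int) : i < 0 -> pz p i = 0.
Proof. by case: i. Qed.

Lemma pz_pos (R : nzRingType) (p : nat -> {poly R}) (n : nat) : pz p n%:Z = p n.
Proof. by []. Qed.

Lemma pz_idx (k a j : nat) : (j <= k + a)%N -> k%:Z + a%:Z - j%:Z = (k + a - j)%N%:Z.
Proof. by move=> h; rewrite -PoszD subzn. Qed.

Lemma idx_eq (k a j m : nat) : (k%:Z + a%:Z - j%:Z == m%:Z) = (k + a == m + j)%N.
Proof. by rewrite subr_eq -!PoszD eqz_nat. Qed.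

Local Open Scope complex_scope.

Lemma cevalpM (R : rcfType) (f g : {poly R}) z : cevalp (f * g) z = cevalp f z * cevalp g z.
Proof. by rewrite /cevalp rmorphM hornerM. Qed.

Lemma cevalpXn (R : rcfType) n (z : complex R) : cevalp 'X^n z = z ^+ n.
Proof. by rewrite /cevalp map_polyXn hornerXn. Qed.

Lemma cevalp0 (R : rcfType) (z : complex R) : cevalp 0 z = 0.
Proof. by rewrite /cevalp map_poly0 horner0. Qed.

Lemma cevalp_sum (R : rcfType) N (c : nat -> R) (F : nat -> {poly R}) z :
  cevalp (\sum_(j < N) c j *: F j) z = \sum_(j < N) (c j)%:C * cevalp (F j) z.
Proof.
rewrite /cevalp rmorph_sum horner_sum; apply: eq_bigr => j _.
by rewrite -mul_polyC rmorphM /= map_polyC hornerM hornerC.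
Qed.

Lemma reval_sum (R : rcfType) N (c : nat -> R) (F : nat -> {poly R}) (y : R) :
  ((\sum_(j < N) c j *: F j).[y])%:C = \sum_(j < N) (c j)%:C * ((F j).[y])%:C.
Proof.
rewrite horner_sum rmorph_sum; apply: eq_bigr => j _.
by rewrite hornerZ rmorphM.
Qed.

Lemma idx_neg (k a j : nat) : (k + a < j)%N -> k%:Z + a%:Z - j%:Z < 0.
Proof. by move=> h; rewrite -PoszD subr_lt0 ltz_nat. Qed.

Unset Implicit Arguments.
Local Open Scope ring_scope.

Theorem theorem1p1 (R : realType) (a b : nat) (w : R -> R)
    (p q : nat -> {poly R}) :
  (0 < b)%N -> (b < a)%N ->
  (forall x : R, 0 < x -> 0 < w x) ->
  (forall k : nat, (@lebesgue_measure R).-integrable `]0%R, +oo[%classic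
                     (fun x => (x ^+ k * w x)%:E)) ->
  biorthogonal (a%:R / b%:R) w p q ->
  exists u v : nat -> nat -> R,
    (forall k : nat,
       'X^a * p k = \sum_(j < (a + b).+1)
                      u j k *: pz p (k%:Z + a%:Z - j%:Z)) /\
    (forall k : nat,
       'X^b * q k = \sum_(j < (a + b).+1)
                      v j k *: pz q (k%:Z + b%:Z - j%:Z)) /\
    (forall j k : nat, (j <= a + b)%N -> (j <= k + a)%N ->
       u j k = v (a + b - j)%N (k + a - j)%N) /\
    (forall (n : nat) (x : complex R) (y : R), (1 <= n)%N -> 0 <= y ->
       x ^+ a != (y%:C) ^+ a ->
       \sum_(k < n) cevalp (p k) x * ((q k).[y `^ (a%:R / b%:R)])%:C =
       (x ^+ a - (y%:C) ^+ a)^-1 *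
         (\sum_(1 <= l < a.+1) \sum_(n - l <= k < n)
             (u (a - l)%N k)%:C * cevalp (p (k + l)%N) x
               * ((q k).[y `^ (a%:R / b%:R)])%:C
          - \sum_(1 <= l < b.+1) \sum_(n - l <= k < n)
             (u (a + l)%N (k + l)%N)%:C * cevalp (p k) x
               * ((q (k + l)%N).[y `^ (a%:R / b%:R)])%:C)).
Proof.
move=> b0 ba wpos wint [hsz horth].
set th := (a%:R / b%:R : R).
have th0 : 0 <= th by rewrite divr_ge0.
have thb : th * b%:R = a%:R by rewrite /th divfK // pnatr_eq0 -lt0n.
have hp : forall j, size (p j) = j.+1 by move=> j; case: (hsz j).
have hq : forall j, size (q j) = j.+1 by move=> j; case: (hsz j) => _ [].
have Bpq : forall j k, Bf th w (p j) (q k) = (j == k)%:R.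
  by move=> j k; rewrite /Bf /Rintegral horth.
have Bs1 := Bfsum1 th0 wpos wint.
have Bs2 := Bfsum2 th0 wpos wint.
have BB1 := BfB1 th0 wpos wint.
have BB2 := BfB2 th0 wpos wint.
have Bf01 : forall g, Bf th w 0 g = 0.
  by move=> g; have := Bs1 0%N (fun=> 0) (fun=> 0) g; rewrite !big_ord0.
have Bf02 : forall f, Bf th w f 0 = 0.
  by move=> f; have := Bs2 0%N (fun=> 0) (fun=> 0) f; rewrite !big_ord0.
have coef1 : forall N (c : nat -> R) (i : nat), Bf th w (\sum_(m < N) c m *: p m) (q i) = if (i < N)%N then c i else 0.
  move=> N c i; rewrite Bs1; under eq_bigr => m _ do rewrite Bpq.
  exact: sum_kron.
have coef2 : forall N (c : nat -> R) (i : nat), Bf th w (p i) (\sum_(m < N) c m *: q m) = if (i < N)%N then c i else 0.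
  move=> N c i; rewrite Bs2; under eq_bigr => m _ do rewrite Bpq eq_sym.
  exact: sum_kron.
have van1 : forall (f : {poly R}) i, (size f <= i)%N -> Bf th w f (q i) = 0.
  move=> f i hf; have [c hc] := expand hp (leqnn (size f)).
  by rewrite hc coef1 ltnNge hf.
have van2 : forall (g : {poly R}) i, (size g <= i)%N -> Bf th w (p i) g = 0.
  move=> g i hg; have [c hc] := expand hq (leqnn (size g)).
  by rewrite hc coef2 ltnNge hg.
have uniq1 : forall f g : {poly R}, (forall m, Bf th w f (q m) = Bf th w g (q m)) -> f = g.
  move=> f g H; apply/eqP; rewrite -subr_eq0; apply/eqP.
  have [c hc] := expand hp (leqnn (size (f - g))).
  rewrite hc big1 // => i _.
  have := coef1 (size (f - g)) c i; rewrite -hc ltn_ord BB1 H subrr => <-.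
  by rewrite scale0r.
have uniq2 : forall f g : {poly R}, (forall m, Bf th w (p m) f = Bf th w (p m) g) -> f = g.
  move=> f g H; apply/eqP; rewrite -subr_eq0; apply/eqP.
  have [c hc] := expand hq (leqnn (size (f - g))).
  rewrite hc big1 // => i _.
  have := coef2 (size (f - g)) c i; rewrite -hc ltn_ord BB2 H subrr => <-.
  by rewrite scale0r.
have sXp : forall k, size ('X^a * p k) = (k + a).+1.
  move=> k; rewrite mulrC size_mulXn; last by rewrite -size_poly_gt0 hp.
  by rewrite hp addnS addnC.
have sXq : forall k, size ('X^b * q k) = (k + b).+1.
  move=> k; rewrite mulrC size_mulXn; last by rewrite -size_poly_gt0 hq.
  by rewrite hq addnS addnC.
have shift : forall f g : {poly R}, Bf th w ('X^a * f) g = Bf th w f ('X^b * g).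
  by move=> f g; exact: Bfshift.
have Bpz1 : forall i m, Bf th w (pz p i) (q m) = (i == m%:Z)%:R.
  by move=> [n|n] m; rewrite /= ?Bpq ?eqz_nat ?Bf01.
have Bpz2 : forall i m, Bf th w (p m) (pz q i) = (i == m%:Z)%:R.
  by move=> [n|n] m; rewrite /= ?Bpq ?eqz_nat ?Bf02 // eq_sym.
pose u := fun j k => if (j <= k + a)%N then Bf th w ('X^a * p k) (q (k + a - j)%N) else 0.
pose v := fun j k => if (j <= k + b)%N then Bf th w (p (k + b - j)%N) ('X^b * q k) else 0.
have H3 : forall j k, (j <= a + b)%N -> (j <= k + a)%N -> u j k = v (a + b - j)%N (k + a - j)%N.
  move=> j k h1 h2; rewrite /u /v h2 ifT; last by lia.
  have -> : (k + a - j + b - (a + b - j) = k)%N by lia.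
  exact: shift.
have H1 : forall k, 'X^a * p k = \sum_(j < (a + b).+1) u j k *: pz p (k%:Z + a%:Z - j%:Z).
  move=> k; apply: uniq1 => m; rewrite (Bs1 _ (fun j => u j k) (fun j => pz p (k%:Z + a%:Z - j%:Z))).
  under eq_bigr => j _ do rewrite Bpz1 idx_eq.
  rewrite (eq_bigr (fun j : 'I_(a+b).+1 => if (k + a == m + j)%N then u j k else 0)); last first.
    by move=> j _; case: eqP; rewrite ?mulr1 ?mulr0.
  rewrite (sum_delta (fun j => u j k)); case: ifP => hc.
    rewrite /u ifT; last by lia.
    by have -> : (k + a - (k + a - m) = m)%N by lia.
  case: (leqP m (k + a)) => hm.
    by rewrite shift van2 // sXq; lia.
  by rewrite van1 // sXp.
have H2 : forall k, 'X^b * q k = \sum_(j < (a + b).+1) v j k *: pz q (k%:Z + b%:Z - j%:Z).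
  move=> k; apply: uniq2 => m; rewrite (Bs2 _ (fun j => v j k) (fun j => pz q (k%:Z + b%:Z - j%:Z))).
  under eq_bigr => j _ do rewrite Bpz2 idx_eq.
  rewrite (eq_bigr (fun j : 'I_(a+b).+1 => if (k + b == m + j)%N then v j k else 0)); last first.
    by move=> j _; case: eqP; rewrite ?mulr1 ?mulr0.
  rewrite (sum_delta (fun j => v j k)); case: ifP => hc.
    rewrite /v ifT; last by lia.
    by have -> : (k + b - (k + b - m) = m)%N by lia.
  case: (leqP m (k + b)) => hm.
    by rewrite -shift van1 // sXp; lia.
  by rewrite van2 // sXq.
exists u, v; split; first exact: H1.
split; first exact: H2.
split; first exact: H3.
move=> n x y n1 y0 hne.
set Y := y `^ th.
have hY : (y%:C) ^+ a = (Y ^+ b)%:C.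
  have e : Y ^+ b = y ^+ a.
    by rewrite /Y -powR_mulrn ?powR_ge0 // -powRrM thb powR_mulrn.
  by rewrite e rmorphXn.
have Hp : forall n', x ^+ a * cevalp (p n') x =
   \sum_(1 <= l < a.+1) (u (a - l)%N n')%:C * cevalp (p (n' + l)%N) x
   + (u a n')%:C * cevalp (p n') x
   + \sum_(1 <= l < b.+1) (u (a + l)%N n')%:C * (if (l <= n')%N then cevalp (p (n' - l)%N) x else 0).
  move=> n'; rewrite -cevalpXn -cevalpM (H1 n').
  rewrite (@cevalp_sum R _ (fun j => u j n') (fun j => pz p (n'%:Z + a%:Z - j%:Z))).
  rewrite (@sum_split _ (fun j => (u j n')%:C * cevalp (pz p (n'%:Z + a%:Z - j%:Z)) x) a b) /=.
  congr (_ + _ + _).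
  - apply: eq_big_nat => l /andP [l1 l2]; rewrite pz_idx; last by lia.
    by have -> : (n' + a - (a - l) = n' + l)%N by lia.
  - by rewrite pz_idx ?leq_addl // addnK.
  - apply: eq_big_nat => l /andP [l1 l2]; case: leqP => hl.
      rewrite pz_idx; last by lia.
      by have -> : (n' + a - (a + l) = n' - l)%N by lia.
    by rewrite pz_neg ?cevalp0 // idx_neg //; lia.
have Hq : forall n', (y%:C) ^+ a * ((q n').[Y])%:C =
   \sum_(1 <= l < b.+1) (u (a + l)%N (n' + l)%N)%:C * ((q (n' + l)%N).[Y])%:C
   + (u a n')%:C * ((q n').[Y])%:C
   + \sum_(1 <= l < a.+1) (if (l <= n')%N then (u (a - l)%N (n' - l)%N)%:C * ((q (n' - l)%N).[Y])%:C else 0).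
  move=> n'.
  have e2 : (Y ^+ b)%:C * ((q n').[Y])%:C = (('X^b * q n').[Y])%:C.
    by rewrite hornerM hornerXn rmorphM.
  rewrite hY e2 (H2 n').
  rewrite (@reval_sum R _ (fun j => v j n') (fun j => pz q (n'%:Z + b%:Z - j%:Z))).
  rewrite [(a + b)%N]addnC.
  rewrite (@sum_split _ (fun j => (v j n')%:C * ((pz q (n'%:Z + b%:Z - j%:Z)).[Y])%:C) b a) /=.
  congr (_ + _ + _).
  - apply: eq_big_nat => l /andP [l1 l2]; rewrite pz_idx; last by lia.
    have -> : (n' + b - (b - l) = n' + l)%N by lia.
    rewrite H3; [|lia|lia].
    have -> : (a + b - (a + l) = b - l)%N by lia.
    by have -> : (n' + l + a - (a + l) = n')%N by lia.
  - rewrite pz_idx ?leq_addl // addnK H3 ?leq_addr ?leq_addl //.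
    by rewrite addKn addnK.
  - apply: eq_big_nat => l /andP [l1 l2]; case: leqP => hl.
      rewrite pz_idx; last by lia.
      have -> : (n' + b - (b + l) = n' - l)%N by lia.
      rewrite H3; [|lia|lia].
      have -> : (a + b - (a - l) = b + l)%N by lia.
      by have -> : (n' - l + a - (a - l) = n')%N by lia.
    by rewrite pz_neg ?horner0 ?rmorph0 ?mulr0 // idx_neg //; lia.
have CD := @CD_alg _ a b (fun j k => (u j k)%:C) (fun k => cevalp (p k) x)
  (fun k => ((q k).[Y])%:C) (x ^+ a) ((y%:C) ^+ a) Hp Hq n.
have hX : x ^+ a - (y%:C) ^+ a != 0 by rewrite subr_eq0.
by rewrite -[LHS]mul1r -(mulVf hX) -mulrA CD.
Qed.
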